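(* Let ${\cal C}\subseteq\mathbb{Z}_2^\alpha\times\mathbb{Z}_4^\beta$ be a $\mathbb{Z}_2\mathbb{Z}_4$-additive code such that $\Phi({\cal C})$ is a linear binary code. Then ${\cal C}_Y$ is a $\mathbb{Z}_4$-additive code such that $\phi({\cal C}_Y)$ is a linear binary code.
   Context: A $\mathbb{Z}_2\mathbb{Z}_4$-additive code is a subgroup of $\mathbb{Z}_2^\alpha\times\mathbb{Z}_4^\beta$; ${\cal C}_Y$ is its projection onto the last $\beta$ ($\mathbb{Z}_4$) coordinates. Writing each $u'_i\in\mathbb{Z}_4$ as $u'_i=\tilde u'_i+2\hat u'_i$ with $\tilde u'_i,\hat u'_i\in\{0,1\}$, the Gray map $\phi:\mathbb{Z}_4^n\to\mathbb{Z}_2^{2n}$ is $\phi(u')=(\hat u'_0,\dots,\hat u'_{n-1},\tilde u'_0+\hat u'_0,\dots,\tilde u'_{n-1}+\hat u'_{n-1})$, and the extended Gray map is $\Phi(u\mid u')=(u\mid\phi(u'))\in\mathbb{Z}_2^{\alpha+2\beta}$. A binary code is linear if it is a $\mathbb{Z}_2$-subspace. *)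

(* Defs.v *)
From HB Require Import structures.
From mathcomp Require Import all_boot all_order all_algebra.
Set Implicit Arguments. Unset Strict Implicit. Unset Printing Implicit Defensive.
Import GRing.Theory.
Local Open Scope ring_scope.

Definition Z2Z4 (alpha beta : nat) := ('rV['Z_2]_alpha * 'rV['Z_4]_beta)%type.

Definition is_subgroup (G : zmodType) (C : {pred G}) : Prop :=
  [/\ 0 \in C,
      forall x y, x \in C -> y \in C -> x + y \in C &
      forall x, x \in C -> - x \in C].

Definition Z2Z4_additive (alpha beta : nat) (C : {set Z2Z4 alpha beta}) : Prop :=
  is_subgroup (fun x : Z2Z4 alpha beta => x \in C).

Definition Z4_additive (beta : nat) (C : {set 'rV['Z_4]_beta}) : Prop :=
  is_subgroup (fun x : 'rV['Z_4]_beta => x \in C).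

Definition binary_linear (n : nat) (S : {set 'rV['Z_2]_n}) : Prop :=
  [/\ 0 \in S,
      forall x y, x \in S -> y \in S -> x + y \in S &
      forall (a : 'Z_2) x, x \in S -> a *: x \in S].

Definition tilde (x : 'Z_4) : 'Z_2 := ((x : nat) %% 2)%:R.
Definition hat (x : 'Z_4) : 'Z_2 := ((x : nat) %/ 2)%:R.

Definition gray (n : nat) (u : 'rV['Z_4]_n) : 'rV['Z_2]_(n + n) :=
  row_mx (\row_i hat (u 0 i)) (\row_i (tilde (u 0 i) + hat (u 0 i))).

Definition Gray (alpha beta : nat) (x : Z2Z4 alpha beta)
  : 'rV['Z_2]_(alpha + (beta + beta)) :=
  row_mx x.1 (gray x.2).

Definition CY (alpha beta : nat) (C : {set Z2Z4 alpha beta}) : {set 'rV['Z_4]_beta} :=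
  [set x.2 | x in C].

(* Main.v *)
Require Import Defs.
From mathcomp Require Import all_boot all_order all_algebra.
Import GRing.Theory.
Local Open Scope ring_scope.

Lemma gray0 n : gray (0 : 'rV['Z_4]_n) = 0.
Proof.
rewrite /gray -row_mx0; congr row_mx; apply/rowP => i; rewrite !mxE /hat /tilde /=.
  by [].
by rewrite addr0.
Qed.

Theorem mainTheorem3 (alpha beta : nat) (C : {set Z2Z4 alpha beta}) :
  Z2Z4_additive C ->
  binary_linear [set Gray x | x in C] ->
  Z4_additive (CY C) /\ binary_linear [set gray y | y in CY C].
Proof.
move=> [C0 CD CN] [G0 GD GZ].
have CY0 : (0 : 'rV['Z_4]_beta) \in CY C by apply/imsetP; exists 0.
split.
  split => //.
  - move=> x y /imsetP[a Ha ->] /imsetP[b Hb ->].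
    by apply/imsetP; exists (a + b) => //; apply: CD.
  - move=> x /imsetP[a Ha ->].
    by apply/imsetP; exists (- a) => //; apply: CN.
split.
- by apply/imsetP; exists 0 => //; rewrite gray0.
- move=> x y /imsetP[u /imsetP[a Ha ->] ->] /imsetP[v /imsetP[b Hb ->] ->].
  have : Gray a + Gray b \in [set Gray x | x in C].
    by apply: GD; apply/imsetP; [exists a | exists b].
  case/imsetP => z Hz.
  rewrite /Gray add_row_mx => /eq_row_mx [_ E].
  apply/imsetP; exists z.2; last by rewrite E.
  by apply/imsetP; exists z.
- move=> c x Hx.
  have : c = 0 \/ c = 1.
    case: c => [[|[|k]] Hk] /=; [left|right|]; try by apply/val_inj.
    by [].
  by case=> ->; rewrite ?scale0r ?scale1r //; apply/imsetP; exists 0 => //; rewrite gray0.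
Qed.
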